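(* Let $\alpha,\beta$ be positive integers and let $h$ be a real-valued function differentiable on an open neighbourhood of $\mathcal{U}_2$ in $\mathbb{C}^{2\times2}$, with $h(\Psi D)=h(\Psi)$ for all $\Psi\in\mathcal{U}_2$ and diagonal unitary $D$, such that $h(\Psi(\theta,\phi))=z_{\alpha,\beta}(\theta,\phi)^TMz_{\alpha,\beta}(\theta,\phi)+C$ for all $\theta,\phi\in\mathbb{R}$, for some real symmetric $M\in\mathbb{R}^{3\times3}$ and $C\in\mathbb{R}$. Let $\lambda_1\ge\lambda_2\ge\lambda_3$ be the eigenvalues of $M$ with orthonormal eigenvectors $w,u,v$, where $w_1\ge0$, and assume $u_1=0$ or $v_1=0$. Let $\theta_*\in[0,\pi/(2\alpha)]$ and $\phi_*\in\mathbb{R}$ satisfy $z_{\alpha,\beta}(\theta_*,\phi_* )=w$, and $\Psi_*=\Psi(\theta_*,\phi_* )$. Then $$h(\Psi_* )-h(I_2)\ge\frac{\sqrt2}{8\alpha}\,\|\operatorname{grad}h(I_2)\|\,\|\Psi_*-I_2\|.$$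
   Context: $\mathcal{U}_2$ is the group of $2\times2$ unitary matrices; $\|\cdot\|$ the Frobenius norm; $\mathbb{C}^{2\times2}$ carries the real inner product $\mathrm{Re}\,\mathrm{tr}(X^HY)$; $\nabla h=\partial h/\partial X^{\Re}+\mathrm{i}\,\partial h/\partial X^{\Im}$ and $\operatorname{grad}h(U)=U\,\mathrm{skew}(U^H\nabla h(U))$ with $\mathrm{skew}(P)=\frac12(P-P^H)$. $\Psi(\theta,\phi)=\begin{bmatrix}\cos\theta&-\sin\theta e^{\mathrm{i}\phi}\\ \sin\theta e^{-\mathrm{i}\phi}&\cos\theta\end{bmatrix}$ and $z_{\alpha,\beta}(\theta,\phi)=(\cos\alpha\theta,-\sin\alpha\theta\cos\beta\phi,-\sin\alpha\theta\sin\beta\phi)^T$. *)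

(* Defs.v *)
From HB Require Import structures.
From mathcomp Require Import all_boot all_order all_algebra.
From mathcomp Require Import all_classical all_reals all_analysis.
From mathcomp Require Import complex.
Set Implicit Arguments. Unset Strict Implicit. Unset Printing Implicit Defensive.
Import Order.TTheory GRing.Theory Num.Theory.
Import numFieldNormedType.Exports.
Local Open Scope ring_scope.
Local Open Scope classical_set_scope.

Section Defs.
Variable R : realType.

Definition mx2 {T : Type} (a b c d : T) : 'M[T]_2 :=
  \matrix_(i < 2, j < 2)
    if (i : nat) == 0%N then (if (j : nat) == 0%N then a else b)
    else (if (j : nat) == 0%N then c else d).

Definition col3 (a b c : R) : 'cV[R]_3 :=
  \col_(i < 3) if (i : nat) == 0%N then a else if (i : nat) == 1%N then b else c.

Definition mkC (a b : R) : R[i] := Complex a b.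
Definition expi (phi : R) : R[i] := mkC (cos phi) (sin phi).

Definition adjmx (X : 'M[R[i]]_2) : 'M[R[i]]_2 := (map_mx (@conjc R) X)^T.

Definition unitary (X : 'M[R[i]]_2) : Prop := adjmx X *m X = 1%:M.

Definition skewH (P : 'M[R[i]]_2) : 'M[R[i]]_2 := (2%:R)^-1 *: (P - adjmx P).

Definition fnorm (X : 'M[R[i]]_2) : R :=
  Num.sqrt (\sum_(i < 2) \sum_(j < 2) (complex.Re (X i j) ^+ 2 + complex.Im (X i j) ^+ 2)).

(* identification of C^{2x2} with the real space R^{2x2} x R^{2x2}
   (real part, imaginary part) *)
Definition of_reim (p : 'M[R]_2 * 'M[R]_2) : 'M[R[i]]_2 :=
  \matrix_(i, j) mkC (p.1 i j) (p.2 i j).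
Definition reim (X : 'M[R[i]]_2) : 'M[R]_2 * 'M[R]_2 :=
  (map_mx (@complex.Re R) X, map_mx (@complex.Im R) X).

Definition realify (h : 'M[R[i]]_2 -> R) : 'M[R]_2 * 'M[R]_2 -> R :=
  fun p => h (of_reim p).

Definition egrad (h : 'M[R[i]]_2 -> R) (X : 'M[R[i]]_2) : 'M[R[i]]_2 :=
  \matrix_(i, j)
    mkC ('D_(delta_mx i j, 0) (realify h) (reim X))
        ('D_(0, delta_mx i j) (realify h) (reim X)).

Definition rgrad (h : 'M[R[i]]_2 -> R) (U : 'M[R[i]]_2) : 'M[R[i]]_2 :=
  U *m skewH (adjmx U *m egrad h U).

Definition Psi (theta phi : R) : 'M[R[i]]_2 :=
  mx2 (mkC (cos theta) 0) (- (mkC (sin theta) 0 * expi phi))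
      (mkC (sin theta) 0 * conjc (expi phi)) (mkC (cos theta) 0).

Definition zab (alpha beta : nat) (theta phi : R) : 'cV[R]_3 :=
  col3 (cos (alpha%:R * theta))
       (- (sin (alpha%:R * theta) * cos (beta%:R * phi)))
       (- (sin (alpha%:R * theta) * sin (beta%:R * phi))).

Definition qform (M : 'M[R]_3) (z : 'cV[R]_3) : R := (z^T *m M *m z) 0 0.

End Defs.

(* Main.v *)
Require Import Defs.
From HB Require Import structures.
From mathcomp Require Import all_boot all_order all_algebra.
From mathcomp Require Import all_classical all_reals all_analysis.
From mathcomp Require Import complex.
From mathcomp Require Import ring lra.
Import Order.TTheory GRing.Theory Num.Theory.
Import numFieldNormedType.Exports.
Local Open Scope ring_scope.
Local Open Scope classical_set_scope.


Section S1.
Variable R : realType.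

Lemma dcos (x : R) : differentiable (@cos R) x.
Proof. by apply/derivable1_diffP; exact: derivable_cos. Qed.
Lemma dsin (x : R) : differentiable (@sin R) x.
Proof. by apply/derivable1_diffP; exact: derivable_sin. Qed.

Lemma chain_deriv (W : normedModType R) (F : W -> R) (A B K : W) (q : R -> R) (dq : R) :
  differentiable F (A + K) ->
  (forall t, F (cos t *: A + sin t *: B + K) = q t) ->
  is_derive (0:R) (1:R) q dq ->
  'd F (A + K) B = dq.
Proof.
move=> dF Fq qd.
pose g := fun t : R => cos t *: A + sin t *: B + K.
have g0 : g 0 = A + K by rewrite /g cos0 sin0 scale1r scale0r addr0.
have dF' : differentiable F (g 0) by rewrite g0.
have dgc : differentiable (fun t : R => cos t *: A) 0 by apply: differentiableZl; apply: dcos.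
have dgs : differentiable (fun t : R => sin t *: B) 0 by apply: differentiableZl; apply: dsin.
have dg : differentiable g 0.
  apply: differentiableD; last exact: differentiable_cst.
  exact: differentiableD.
have Dg : 'd g 0 1 = B.
  have -> : g = (fun t : R => cos t *: A) + (fun t : R => sin t *: B) + cst K by [].
  rewrite (diffD (f:=(fun t : R => cos t *: A) + (fun t : R => sin t *: B)) (g:=cst K)); last first.
    exact: differentiable_cst.
    exact: differentiableD.
  rewrite diff_cst /= addr0.
  rewrite (diffD (f:=(fun t : R => cos t *: A)) (g:=fun t : R => sin t *: B)) //=.
  rewrite (diffZl (k:=@cos R)); last exact: dcos.
  rewrite (diffZl (k:=@sin R)); last exact: dsin.
  rewrite -(deriveE (f:=@cos R)); last exact: dcos.
  rewrite -(deriveE (f:=@sin R)); last exact: dsin.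
  by rewrite !derive_val sin0 cos0 oppr0 scale0r add0r scale1r.
have qE : q = F \o g by apply/funext => t; rewrite /= -Fq.
rewrite -(@derive_val _ _ _ _ _ _ _ qd) qE [RHS]deriveE; last first.
  exact: differentiable_comp.
rewrite (diff_comp dg dF').
by rewrite /= Dg g0.
Qed.
End S1.


Section S2.
Variable R : realType.
Implicit Types (f g : R -> R).

Lemma qformE (M : 'M[R]_3) a b c :
  qform M (col3 a b c) =
  a * (M 0 0 * a + M 0 1 * b + M 0 2%:R * c) +
  b * (M 1 0 * a + M 1 1 * b + M 1 2%:R * c) +
  c * (M 2%:R 0 * a + M 2%:R 1 * b + M 2%:R 2%:R * c).
Proof.
rewrite /qform /col3 !mxE !big_ord_recr !big_ord0 /= !mxE.
rewrite !big_ord_recr !big_ord0 /= !mxE /=.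
have E0 : forall p q, widen_ord (m:=3) p (widen_ord (m:=2) q (@ord_max 0)) = 0 by move=> *; apply/val_inj.
have E1 : forall p, widen_ord (m:=3) p (@ord_max 1) = 1 by move=> *; apply/val_inj.
have E2 : (@ord_max 2) = 2%:R by apply/val_inj.
rewrite !E0 !E1 E2; ring.
Qed.

Lemma is_derive_comp_scale (f : R -> R) (a df : R) :
  is_derive (0:R) (1:R) f df -> is_derive (0:R) (1:R) (fun t : R => f (a * t)) (a * df).
Proof.
move=> hf.
have hl : is_derive (0:R) (1:R) (a \*: (@id R)) (a *: 1) by apply: is_deriveZ.
have dl : differentiable (a \*: (@id R)) 0.
  by apply/derivable1_diffP; exact: ex_derive.
have l0 : (a \*: (@id R)) 0 = 0 by rewrite /= scaler0.
have df' : differentiable f ((a \*: (@id R)) 0).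
  by rewrite l0; apply/derivable1_diffP; exact: ex_derive.
have E : (fun t : R => f (a * t)) = f \o (a \*: (@id R)) by apply/funext.
rewrite E.
have dc : differentiable (f \o (a \*: (@id R))) 0 by exact: differentiable_comp.
apply: DeriveDef; first by apply/derivable1_diffP.
rewrite deriveE // diff_comp //= -deriveE //.
have df0 : differentiable f 0 by rewrite l0 in df'.
have d1 : 'd (a \*: (@id R)) 0 1 = a.
  by rewrite -deriveE // derive_val /GRing.scale /= mulr1.
rewrite d1 scaler0 deriveE //.
have -> : a = a *: (1:R) by rewrite /GRing.scale /= mulr1.
rewrite linearZ -deriveE // derive_val.
by rewrite /GRing.scale /= mulr1.
Qed.

Lemma is_derive_cosZ (a : R) : is_derive (0:R) (1:R) (fun t : R => cos (a * t)) 0.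
Proof.
apply: (is_derive_eq (@is_derive_comp_scale _ a _ (is_derive_cos 0))).
by rewrite sin0 oppr0 mulr0.
Qed.

Lemma is_derive_sinZ (a : R) : is_derive (0:R) (1:R) (fun t : R => sin (a * t)) a.
Proof.
apply: (is_derive_eq (@is_derive_comp_scale _ a _ (is_derive_sin 0))).
by rewrite cos0 mulr1.
Qed.

Lemma idM {f g : R -> R} {df dg} : is_derive (0:R) (1:R) f df -> is_derive (0:R) (1:R) g dg ->
  is_derive (0:R) (1:R) (fun t => f t * g t) (f 0 * dg + g 0 * df).
Proof. by move=> hf hg; exact: (is_deriveM hf hg). Qed.
Lemma idZ {f : R -> R} k {df} : is_derive (0:R) (1:R) f df ->
  is_derive (0:R) (1:R) (fun t => k * f t) (k * df).
Proof. by move=> hf; exact: (is_deriveZ k hf). Qed.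
Lemma idD {f g : R -> R} {df dg} : is_derive (0:R) (1:R) f df -> is_derive (0:R) (1:R) g dg ->
  is_derive (0:R) (1:R) (fun t => f t + g t) (df + dg).
Proof. by move=> hf hg; exact: (is_deriveD hf hg). Qed.
Lemma idC (k : R) : is_derive (0:R) (1:R) (fun _ : R => k) 0.
Proof. exact: is_derive_cst. Qed.

Lemma is_derive_q (M : 'M[R]_3) (a c s C : R) :
  is_derive (0:R) (1:R)
    (fun t : R => qform M (col3 (cos (a*t)) (-(sin (a*t) * c)) (-(sin (a*t) * s))) + C)
    (- (a * c) * (M 0 1 + M 1 0) - (a * s) * (M 0 2%:R + M 2%:R 0)).
Proof.
pose f0 := fun t : R => cos (a * t).
pose f1 := fun t : R => sin (a * t).
have h0 : is_derive (0:R) (1:R) f0 0 := is_derive_cosZ a.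
have h1 : is_derive (0:R) (1:R) f1 a := is_derive_sinZ a.
pose k1 := M 0 0.
pose k2 := - (c * (M 0 1 + M 1 0) + s * (M 0 2%:R + M 2%:R 0)).
pose k3 := M 1 1 * c ^+ 2 + (M 1 2%:R + M 2%:R 1) * c * s + M 2%:R 2%:R * s ^+ 2.
have H := idD (idD (idD (idZ k1 (idM h0 h0)) (idZ k2 (idM h0 h1))) (idZ k3 (idM h1 h1))) (idC C).
have E : (fun t : R => qform M (col3 (cos (a*t)) (-(sin (a*t) * c)) (-(sin (a*t) * s))) + C)
   = (fun t => k1 * (f0 t * f0 t) + k2 * (f0 t * f1 t) + k3 * (f1 t * f1 t) + C).
  apply/funext => t; rewrite qformE /f0 /f1 /k1 /k2 /k3; ring.
rewrite E; apply: (is_derive_eq H).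
rewrite /f0 /f1 /k2 !mulr0 cos0 sin0; ring.
Qed.
End S2.

Ltac ord2 i := let H := fresh in case: i => [[|[|//]] H].

Lemma mx2_eta {T : Type} (A : 'M[T]_2) : A = mx2 (A 0 0) (A 0 1) (A 1 0) (A 1 1).
Proof.
apply/matrixP => i j; rewrite mxE; ord2 i; ord2 j => /=; congr (A _ _); exact/val_inj.
Qed.

Lemma mx2_mul (T : comNzRingType) (a b c d e f g h : T) :
  mx2 a b c d *m mx2 e f g h = mx2 (a*e + b*g) (a*f + b*h) (c*e + d*g) (c*f + d*h).
Proof.
apply/matrixP => i j; rewrite !mxE !big_ord_recr big_ord0 /= !mxE add0r.
by ord2 i; ord2 j.
Qed.

Lemma mx2_1 (T : comNzRingType) : (1%:M : 'M[T]_2) = mx2 1 0 0 1.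
Proof. by apply/matrixP => i j; rewrite !mxE; ord2 i; ord2 j. Qed.

Lemma mx2_B (T : comNzRingType) (a b c d e f g h : T) :
  mx2 a b c d - mx2 e f g h = mx2 (a - e) (b - f) (c - g) (d - h).
Proof. by apply/matrixP => i j; rewrite !mxE; ord2 i; ord2 j. Qed.

Lemma mx2_D (T : comNzRingType) (a b c d e f g h : T) :
  mx2 a b c d + mx2 e f g h = mx2 (a + e) (b + f) (c + g) (d + h).
Proof. by apply/matrixP => i j; rewrite !mxE; ord2 i; ord2 j. Qed.

Lemma mx2_Z (T : comNzRingType) (k a b c d : T) :
  k *: mx2 a b c d = mx2 (k * a) (k * b) (k * c) (k * d).
Proof. by apply/matrixP => i j; rewrite !mxE; ord2 i; ord2 j. Qed.

Lemma mx2_0 (T : comNzRingType) : (0 : 'M[T]_2) = mx2 0 0 0 0.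
Proof. by apply/matrixP => i j; rewrite !mxE; ord2 i; ord2 j. Qed.

Section S3.
Variable R : realType.

Lemma adj_mx2 (a b c d : R[i]) : adjmx (mx2 a b c d) = mx2 (conjc a) (conjc c) (conjc b) (conjc d).
Proof. by apply/matrixP => i j; rewrite !mxE; ord2 i; ord2 j. Qed.

Lemma reim_mx2 (a b c d : R[i]) : reim (mx2 a b c d) =
  (mx2 (complex.Re a) (complex.Re b) (complex.Re c) (complex.Re d), mx2 (complex.Im a) (complex.Im b) (complex.Im c) (complex.Im d)).
Proof. by congr pair; apply/matrixP => i j; rewrite !mxE; ord2 i; ord2 j. Qed.

Lemma of_reim_mx2 (a b c d a' b' c' d' : R) :
  of_reim (mx2 a b c d, mx2 a' b' c' d') = mx2 (mkC a a') (mkC b b') (mkC c c') (mkC d d').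
Proof. by apply/matrixP => i j; rewrite !mxE; ord2 i; ord2 j. Qed.

Lemma of_reimK (X : 'M[R[i]]_2) : of_reim (reim X) = X.
Proof. by apply/matrixP => i j; rewrite !mxE; case: (X i j). Qed.

Lemma delta00 : delta_mx 0 0 = mx2 1 0 0 0 :> 'M[R]_2.
Proof. by apply/matrixP => i j; rewrite !mxE; ord2 i; ord2 j. Qed.
Lemma delta01 : delta_mx 0 1 = mx2 0 1 0 0 :> 'M[R]_2.
Proof. by apply/matrixP => i j; rewrite !mxE; ord2 i; ord2 j. Qed.
Lemma delta10 : delta_mx 1 0 = mx2 0 0 1 0 :> 'M[R]_2.
Proof. by apply/matrixP => i j; rewrite !mxE; ord2 i; ord2 j. Qed.
Lemma delta11 : delta_mx 1 1 = mx2 0 0 0 1 :> 'M[R]_2.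
Proof. by apply/matrixP => i j; rewrite !mxE; ord2 i; ord2 j. Qed.

Lemma fnorm_mx2 (a b c d : R[i]) : fnorm (mx2 a b c d) =
  Num.sqrt (complex.Re a ^+ 2 + complex.Im a ^+ 2 + (complex.Re b ^+ 2 + complex.Im b ^+ 2) + (complex.Re c ^+ 2 + complex.Im c ^+ 2 + (complex.Re d ^+ 2 + complex.Im d ^+ 2))).
Proof.
rewrite /fnorm !big_ord_recr !big_ord0 /= !mxE /= !add0r.
by rewrite addrA.
Qed.

Lemma diag_mx2 (a d : R[i]) : is_diag_mx (mx2 a 0 0 d).
Proof. by apply/is_diag_mxP => i j; rewrite !mxE; ord2 i; ord2 j. Qed.

Lemma complexE (x y : R[i]) : complex.Re x = complex.Re y -> complex.Im x = complex.Im y -> x = y.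
Proof. by case: x => a b; case: y => c d /= -> ->. Qed.

Lemma Re1 : complex.Re (1 : R[i]) = 1. Proof. by []. Qed.
Lemma Im1 : complex.Im (1 : R[i]) = 0. Proof. by []. Qed.
Lemma Re0 : complex.Re (0 : R[i]) = 0. Proof. by []. Qed.
Lemma Im0 : complex.Im (0 : R[i]) = 0. Proof. by []. Qed.
Lemma ReM (x y : R[i]) : complex.Re (x * y) = complex.Re x * complex.Re y - complex.Im x * complex.Im y.
Proof. by case: x => a b; case: y => c d. Qed.
Lemma ImM (x y : R[i]) : complex.Im (x * y) = complex.Re x * complex.Im y + complex.Im x * complex.Re y.
Proof. by case: x => a b; case: y => c d. Qed.
Lemma ReD (x y : R[i]) : complex.Re (x + y) = complex.Re x + complex.Re y.
Proof. by case: x => a b; case: y => c d. Qed.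
Lemma ImD (x y : R[i]) : complex.Im (x + y) = complex.Im x + complex.Im y.
Proof. by case: x => a b; case: y => c d. Qed.
Lemma ReN (x : R[i]) : complex.Re (- x) = - complex.Re x.
Proof. by case: x. Qed.
Lemma ImN (x : R[i]) : complex.Im (- x) = - complex.Im x.
Proof. by case: x. Qed.
Lemma ReB (x y : R[i]) : complex.Re (x - y) = complex.Re x - complex.Re y.
Proof. by rewrite ReD ReN. Qed.
Lemma ImB (x y : R[i]) : complex.Im (x - y) = complex.Im x - complex.Im y.
Proof. by rewrite ImD ImN. Qed.
Lemma Rec (x : R[i]) : complex.Re (conjc x) = complex.Re x.
Proof. by case: x. Qed.
Lemma Imc (x : R[i]) : complex.Im (conjc x) = - complex.Im x.
Proof. by case: x. Qed.
Lemma RemkC (a b : R) : complex.Re (mkC a b) = a. Proof. by []. Qed.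
Lemma ImmkC (a b : R) : complex.Im (mkC a b) = b. Proof. by []. Qed.
Lemma Reexpi (a : R) : complex.Re (expi a) = cos a. Proof. by []. Qed.
Lemma Imexpi (a : R) : complex.Im (expi a) = sin a. Proof. by []. Qed.

Definition CE := (ReM, ImM, ReD, ImD, ReN, ImN, Rec, Imc, RemkC, ImmkC, Reexpi, Imexpi, Re1, Im1, Re0, Im0).

Lemma pairE (k1 k2 : R) (X1 Y1 X2 Y2 X3 Y3 : 'M[R]_2) :
  (k1 *: (X1, Y1) + k2 *: (X2, Y2) + (X3, Y3) : 'M[R]_2 * 'M[R]_2) =
  (k1 *: X1 + k2 *: X2 + X3, k1 *: Y1 + k2 *: Y2 + Y3).
Proof. by []. Qed.

Lemma Psi_reim (t phi : R) : reim (Psi t phi) =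
  cos t *: (mx2 1 0 0 1, mx2 0 0 0 0) +
  sin t *: (mx2 0 (- cos phi) (cos phi) 0, mx2 0 (- sin phi) (- sin phi) 0) +
  (mx2 0 0 0 0, mx2 0 0 0 0).
Proof.
rewrite pairE !mx2_Z !mx2_D /Psi reim_mx2 !CE.
congr (pair (mx2 _ _ _ _) (mx2 _ _ _ _)); ring.
Qed.

Definition D0 (t : R) : 'M[R[i]]_2 := mx2 (expi t) 0 0 1.
Definition D1 (t : R) : 'M[R[i]]_2 := mx2 1 0 0 (expi t).

Lemma D0_reim (t : R) : reim (D0 t) =
  cos t *: (mx2 1 0 0 0, mx2 0 0 0 0) + sin t *: (mx2 0 0 0 0, mx2 1 0 0 0) +
  (mx2 0 0 0 1, mx2 0 0 0 0).
Proof.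
rewrite pairE !mx2_Z !mx2_D /D0 reim_mx2 !CE.
congr (pair (mx2 _ _ _ _) (mx2 _ _ _ _)); ring.
Qed.

Lemma D1_reim (t : R) : reim (D1 t) =
  cos t *: (mx2 0 0 0 1, mx2 0 0 0 0) + sin t *: (mx2 0 0 0 0, mx2 0 0 0 1) +
  (mx2 1 0 0 0, mx2 0 0 0 0).
Proof.
rewrite pairE !mx2_Z !mx2_D /D1 reim_mx2 !CE.
congr (pair (mx2 _ _ _ _) (mx2 _ _ _ _)); ring.
Qed.

Lemma unitary1 : unitary (1%:M : 'M[R[i]]_2).
Proof.
rewrite /unitary mx2_1 adj_mx2 mx2_mul.
congr mx2; apply: complexE; rewrite !CE; ring.
Qed.

Lemma unitaryD0 t : unitary (D0 t).
Proof.
rewrite /unitary /D0 mx2_1 adj_mx2 mx2_mul.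
congr mx2; apply: complexE; rewrite !CE; try ring.
rewrite -(cos2Dsin2 t); ring.
Qed.

Lemma unitaryD1 t : unitary (D1 t).
Proof.
rewrite /unitary /D1 mx2_1 adj_mx2 mx2_mul.
congr mx2; apply: complexE; rewrite !CE; try ring.
rewrite -(cos2Dsin2 t); ring.
Qed.

Lemma reim1 : reim (1%:M : 'M[R[i]]_2) = (mx2 1 0 0 1, mx2 0 0 0 0).
Proof. by rewrite mx2_1 reim_mx2 !CE. Qed.

Lemma pairD' (X1 Y1 X2 Y2 : 'M[R]_2) : ((X1, Y1) + (X2, Y2) : 'M[R]_2 * 'M[R]_2) = (X1 + X2, Y1 + Y2).
Proof. by []. Qed.
Lemma pairB' (X1 Y1 X2 Y2 : 'M[R]_2) : ((X1, Y1) - (X2, Y2) : 'M[R]_2 * 'M[R]_2) = (X1 - X2, Y1 - Y2).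
Proof. by []. Qed.
Lemma pairZ' (k : R) (X1 Y1 : 'M[R]_2) : (k *: (X1, Y1) : 'M[R]_2 * 'M[R]_2) = (k *: X1, k *: Y1).
Proof. by []. Qed.
Lemma pairN' (X1 Y1 : 'M[R]_2) : (- (X1, Y1) : 'M[R]_2 * 'M[R]_2) = (- X1, - Y1).
Proof. by []. Qed.

Lemma mx2_N (a b c d : R) : - mx2 a b c d = mx2 (- a) (- b) (- c) (- d).
Proof. by apply/matrixP => i j; rewrite !mxE; ord2 i; ord2 j. Qed.

Lemma dir_decomp (phi : R) :
  ((mx2 0 (- cos phi) (cos phi) 0, mx2 0 (- sin phi) (- sin phi) 0) : 'M[R]_2 * 'M[R]_2) =
  cos phi *: ((mx2 0 0 1 0, mx2 0 0 0 0) - (mx2 0 1 0 0, mx2 0 0 0 0)) +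
  sin phi *: (- (mx2 0 0 0 0, mx2 0 1 0 0) - (mx2 0 0 0 0, mx2 0 0 1 0)).
Proof.
rewrite !pairN' !pairB' !pairZ' pairD' ?mx2_B ?mx2_N ?mx2_B ?mx2_Z ?mx2_D ?mx2_Z ?mx2_D ?mx2_Z ?mx2_D.
congr (pair (mx2 _ _ _ _) (mx2 _ _ _ _)); ring.
Qed.

Lemma Psi00 : Psi 0 0 = (1%:M : 'M[R[i]]_2).
Proof.
rewrite /Psi mx2_1 cos0 sin0.
congr mx2; apply: complexE; rewrite !CE; ring.
Qed.

Lemma inv2C : ((2%:R : R[i])^-1) = mkC (2^-1) 0.
Proof.
by rewrite -(rmorph_nat (real_complex R) 2) -fmorphV.
Qed.

Lemma fnorm_PsiB (t phi : R) : fnorm (Psi t phi - 1%:M) = Num.sqrt (4 - 4 * cos t).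
Proof.
rewrite /Psi mx2_1 mx2_B fnorm_mx2 !CE; congr Num.sqrt.
have e1 := cos2Dsin2 t; have e2 := cos2Dsin2 phi.
transitivity (2 * (cos t - 1) ^+ 2 + 2 * sin t ^+ 2 * (cos phi ^+ 2 + sin phi ^+ 2)); first ring.
rewrite e2 mulr1.
have -> : sin t ^+ 2 = 1 - cos t ^+ 2 by lra.
ring.
Qed.

Lemma conj1 : ((1 : R[i])^*)%C = 1. Proof. by apply: complexE; rewrite ?Rec ?Imc ?Im1 ?oppr0. Qed.
Lemma conj0 : ((0 : R[i])^*)%C = 0. Proof. by apply: complexE; rewrite ?Rec ?Imc ?Im0 ?oppr0. Qed.

Lemma fnorm_rgrad (g00 g01 g10 g11 : R[i]) :
  complex.Im g00 = 0 -> complex.Im g11 = 0 ->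
  fnorm (1%:M *m skewH (adjmx 1%:M *m mx2 g00 g01 g10 g11)) =
  Num.sqrt (2 * (((complex.Re g10 - complex.Re g01) / 2) ^+ 2 +
                 ((complex.Im g10 + complex.Im g01) / 2) ^+ 2)).
Proof.
move=> h0 h1.
rewrite /skewH mx2_1 adj_mx2.
rewrite [mx2 _ _ _ _ *m mx2 g00 _ _ _]mx2_mul adj_mx2 mx2_B mx2_Z inv2C.
rewrite mx2_mul fnorm_mx2. rewrite !conj1 !conj0 !mul1r !mul0r !add0r !addr0.
rewrite !(ReM, ImM, ReD, ImD, ReN, ImN, Rec, Imc, RemkC, ImmkC).
rewrite h0 h1; congr Num.sqrt.
by field.
Qed.

End S3.


Section S4.
Variable R : realType.

Lemma scal_key (a b w1 w2 u1 u2 l1 l2 M00 M10 M20 N : R) :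
  a ^+ 2 + b ^+ 2 = 1 -> a * w1 + b * u1 = 0 -> a * w2 + b * u2 = 0 ->
  a ^+ 2 + w1 ^+ 2 + w2 ^+ 2 = 1 ->
  M00 = l1 * a ^+ 2 + l2 * b ^+ 2 ->
  M10 = l1 * a * w1 + l2 * (b * u1) -> M20 = l1 * a * w2 + l2 * (b * u2) ->
  l2 <= l1 -> 0 <= a -> 0 <= N -> N <= 4 * (1 - a) ->
  0 <= l1 - M00 /\ (M10 ^+ 2 + M20 ^+ 2) * N <= 16 * (l1 - M00) ^+ 2.
Proof.
move=> hab h1 h2 hw hM00 hM10 hM20 hl ha hN0 hN.
have e1 : b * u1 = - (a * w1) by lra.
have e2 : b * u2 = - (a * w2) by lra.
have eK : M10 ^+ 2 + M20 ^+ 2 = (l1 - l2) ^+ 2 * a ^+ 2 * (1 - a ^+ 2).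
  rewrite hM10 hM20 e1 e2.
  have -> : 1 - a ^+ 2 = w1 ^+ 2 + w2 ^+ 2 by lra.
  ring.
have eL : l1 - M00 = (l1 - l2) * (1 - a ^+ 2).
  rewrite hM00; have -> : b ^+ 2 = 1 - a ^+ 2 by lra. ring.
have hp : 0 <= 1 - a ^+ 2 by nra.
have ha1 : a <= 1 by nra.
split; first by rewrite eL; nra.
rewrite eK eL.
have H1 : a ^+ 2 * N <= 16 * (1 - a ^+ 2).
  have s1 : a ^+ 2 * N <= a ^+ 2 * (4 * (1 - a)) by apply: ler_wpM2l => //; exact: sqr_ge0.
  have s2 : a ^+ 2 * (4 * (1 - a)) <= 4 * (1 - a) by nra.
  have s3 : 4 * (1 - a) <= 16 * (1 - a ^+ 2) by nra.
  lra.
have hd : 0 <= (l1 - l2) ^+ 2 * (1 - a ^+ 2) by apply: mulr_ge0 => //; exact: sqr_ge0.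
have := ler_wpM2l hd H1.
move=> H; apply: le_trans (_ : _ <= (l1 - l2) ^+ 2 * (1 - a ^+ 2) * (16 * (1 - a ^+ 2))) _.
  have -> : (l1 - l2) ^+ 2 * a ^+ 2 * (1 - a ^+ 2) * N = (l1 - l2) ^+ 2 * (1 - a ^+ 2) * (a ^+ 2 * N) by ring.
  exact: H.
by rewrite le_eqVlt; apply/orP; left; apply/eqP; ring.
Qed.

Lemma dot3 (x y : 'cV[R]_3) : (x^T *m y) 0 0 = x 0 0 * y 0 0 + x 1 0 * y 1 0 + x 2%:R 0 * y 2%:R 0.
Proof.
rewrite !mxE !big_ord_recr big_ord0 /= !mxE add0r.
have E0 : forall p q, widen_ord (m:=3) p (widen_ord (m:=2) q (@ord_max 0)) = 0 by move=> *; apply/val_inj.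
have E1 : forall p, widen_ord (m:=3) p (@ord_max 1) = 1 by move=> *; apply/val_inj.
have E2 : (@ord_max 2) = 2%:R by apply/val_inj.
by rewrite !E0 !E1 E2.
Qed.

Lemma mv3 (M : 'M[R]_3) (x : 'cV[R]_3) i : (M *m x) i 0 = M i 0 * x 0 0 + M i 1 * x 1 0 + M i 2%:R * x 2%:R 0.
Proof.
rewrite !mxE !big_ord_recr big_ord0 /= add0r.
have E0 : forall p q, widen_ord (m:=3) p (widen_ord (m:=2) q (@ord_max 0)) = 0 by move=> *; apply/val_inj.
have E1 : forall p, widen_ord (m:=3) p (@ord_max 1) = 1 by move=> *; apply/val_inj.
have E2 : (@ord_max 2) = 2%:R by apply/val_inj.
by rewrite !E0 !E1 E2.
Qed.

Lemma sum3 (f : 'I_3 -> R) : \sum_i f i = f 0 + f 1 + f 2%:R.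
Proof.
rewrite !big_ord_recr big_ord0 /= add0r.
have E0 : forall p q, widen_ord (m:=3) p (widen_ord (m:=2) q (@ord_max 0)) = 0 by move=> *; apply/val_inj.
have E1 : forall p, widen_ord (m:=3) p (@ord_max 1) = 1 by move=> *; apply/val_inj.
have E2 : (@ord_max 2) = 2%:R by apply/val_inj.
by rewrite !E0 !E1 E2.
Qed.

Lemma ord3P (i : 'I_3) : [\/ i = 0, i = 1 | i = 2%:R].
Proof.
case: i => [[|[|[|//]]] H].
- by apply: Or31; apply/val_inj.
- by apply: Or32; apply/val_inj.
- by apply: Or33; apply/val_inj.
Qed.

Lemma complete3 (w u v : 'cV[R]_3) :
  w^T *m w = 1%:M -> u^T *m u = 1%:M -> v^T *m v = 1%:M ->
  w^T *m u = 0 -> w^T *m v = 0 -> u^T *m v = 0 ->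
  forall k : 'I_3, w 0 0 * w k 0 + u 0 0 * u k 0 + v 0 0 * v k 0 = (k == 0)%:R.
Proof.
move=> hww huu hvv hwu hwv huv.
have d (x y : 'cV[R]_3) (H : x^T *m y = 1%:M) : x 0 0 * y 0 0 + x 1 0 * y 1 0 + x 2%:R 0 * y 2%:R 0 = 1.
  by rewrite -(dot3 x y) H mxE.
have z (x y : 'cV[R]_3) (H : x^T *m y = 0) : x 0 0 * y 0 0 + x 1 0 * y 1 0 + x 2%:R 0 * y 2%:R 0 = 0.
  by rewrite -(dot3 x y) H mxE.
pose Q := \matrix_(i < 3, j < 3) (if (j : nat) == 0%N then w i 0 else if (j : nat) == 1%N then u i 0 else v i 0).
have ww := d w w hww; have uu := d u u huu; have vv := d v v hvv.
have wu := z w u hwu; have wv := z w v hwv; have uv := z u v huv.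
clear d z hww huu hvv hwu hwv huv.
have QQ : Q^T *m Q = 1%:M.
  apply/matrixP => j k; rewrite !mxE sum3 !mxE.
  by case: (ord3P j) => ->; case: (ord3P k) => -> /=;
    move: ww uu vv wu wv uv => /= ww uu vv wu wv uv; nra.
have QQ' := mulmx1C QQ.
move=> k; have := congr1 (fun A : 'M[R]_3 => A 0 k) QQ'; rewrite !mxE sum3 !mxE /=.
clear QQ QQ'.
by case: (ord3P k) => -> /= H; move: ww uu vv wu wv uv => /= ww uu vv wu wv uv; nra.
Qed.
Lemma Mcol0 (M : 'M[R]_3) l1 l2 l3 (w u v : 'cV[R]_3) :
  M *m w = l1 *: w -> M *m u = l2 *: u -> M *m v = l3 *: v ->
  (forall k : 'I_3, w 0 0 * w k 0 + u 0 0 * u k 0 + v 0 0 * v k 0 = (k == 0)%:R) ->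
  forall i, M i 0 = l1 * w 0 0 * w i 0 + l2 * u 0 0 * u i 0 + l3 * v 0 0 * v i 0.
Proof.
move=> hw hu hv hc i.
have ew := congr1 (fun A : 'cV[R]_3 => A i 0) hw; rewrite /= mv3 mxE in ew.
have eu := congr1 (fun A : 'cV[R]_3 => A i 0) hu; rewrite /= mv3 mxE in eu.
have ev := congr1 (fun A : 'cV[R]_3 => A i 0) hv; rewrite /= mv3 mxE in ev.
have c0 := hc 0; have c1 := hc 1; have c2 := hc 2%:R.
rewrite /= in c0 c1 c2.
transitivity (M i 0 * (w 0 0 * w 0 0 + u 0 0 * u 0 0 + v 0 0 * v 0 0) +
  M i 1 * (w 0 0 * w 1 0 + u 0 0 * u 1 0 + v 0 0 * v 1 0) +
  M i 2%:R * (w 0 0 * w 2%:R 0 + u 0 0 * u 2%:R 0 + v 0 0 * v 2%:R 0)).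
  by rewrite c0 c1 c2; ring.
transitivity (w 0 0 * (M i 0 * w 0 0 + M i 1 * w 1 0 + M i 2%:R * w 2%:R 0) +
  u 0 0 * (M i 0 * u 0 0 + M i 1 * u 1 0 + M i 2%:R * u 2%:R 0) +
  v 0 0 * (M i 0 * v 0 0 + M i 1 * v 1 0 + M i 2%:R * v 2%:R 0)).
  by ring.
by rewrite ew eu ev; ring.
Qed.
Lemma angle_exists (x y : R) : x ^+ 2 + y ^+ 2 = 1 -> exists phi : R, cos phi = x /\ sin phi = y.
Proof.
move=> hxy.
have hx : -1 <= x <= 1 by apply/andP; split; nra.
have e1 : 1 - x ^+ 2 = y ^+ 2 by lra.
have cx : cos (acos x) = x by apply: acosK; rewrite in_itv /=.
have sx : sin (acos x) = `|y| by rewrite sin_acos // e1 sqrtr_sqr.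
have [hy|hy] := leP 0 y.
  by exists (acos x); split => //; rewrite sx ger0_norm.
exists (- acos x); split; first by rewrite cosN.
by rewrite sinN sx ltr0_norm // opprK.
Qed.

Lemma grad_bound (X Y a M10 M20 b : R) :
  (forall phi : R, X * cos phi - Y * sin phi = - (a * (M10 * cos (b * phi) + M20 * sin (b * phi)))) ->
  X ^+ 2 + Y ^+ 2 <= a ^+ 2 * (M10 ^+ 2 + M20 ^+ 2).
Proof.
move=> H.
have hR : 0 <= a ^+ 2 * (M10 ^+ 2 + M20 ^+ 2) by apply: mulr_ge0; nra.
have [h0|hpos] := eqVneq (X ^+ 2 + Y ^+ 2) 0; first by rewrite h0.
have hp : 0 < X ^+ 2 + Y ^+ 2 by rewrite lt_def hpos /=; nra.
pose r := Num.sqrt (X ^+ 2 + Y ^+ 2).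
have hr : 0 < r by rewrite sqrtr_gt0.
have hr2 : r ^+ 2 = X ^+ 2 + Y ^+ 2 by rewrite sqr_sqrtr // ltW.
have hrn : r != 0 by rewrite gt_eqF.
have [phi [hc hs]] : exists phi : R, cos phi = - X / r /\ sin phi = Y / r.
  apply: angle_exists.
  rewrite !expr_div_n sqrrN -mulrDl hr2 divff //.
have := H phi; rewrite hc hs.
have -> : X * (- X / r) - Y * (Y / r) = - r.
  have e : X * (- X / r) - Y * (Y / r) = - (r ^+ 2 / r) by rewrite hr2; field.
  by rewrite e expr2 mulfK.
move=> /eqP; rewrite eqr_opp => /eqP hre.
rewrite -hr2 hre exprMn.
apply: ler_wpM2l; first exact: sqr_ge0.
have c2 := cos2Dsin2 (b * phi).
set c := cos (b * phi) in c2 *; set s := sin (b * phi) in c2 *.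
have e : (M10 * c + M20 * s) ^+ 2 + (M10 * s - M20 * c) ^+ 2 = (M10 ^+ 2 + M20 ^+ 2) * (c ^+ 2 + s ^+ 2) by ring.
rewrite c2 mulr1 in e.
have := sqr_ge0 (M10 * s - M20 * c).
lra.
Qed.
Lemma final_ineq (al L G2 K2 N : R) : 0 < al -> 0 <= L -> 0 <= G2 -> G2 <= al ^+ 2 * K2 ->
  0 <= N -> K2 * N <= 16 * L ^+ 2 ->
  Num.sqrt 2 / (8 * al) * Num.sqrt (2 * G2) * Num.sqrt N <= L.
Proof.
move=> ha hL hG hGK hN hKN.
have e : Num.sqrt 2 / (8 * al) * Num.sqrt (2 * G2) * Num.sqrt N =
   Num.sqrt (2 * (2 * G2) * N) / (8 * al).
  have h4 : 0 <= 2 * (2 * G2) by nra.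
  have h2 : (0:R) <= 2 by lra.
  rewrite (sqrtrM N h4) (sqrtrM (2 * G2) h2).
  set x1 := Num.sqrt 2; set x2 := Num.sqrt (2 * G2); set x3 := Num.sqrt N; set y := (8 * al)^-1.
  rewrite /x1 /x2 /x3 /y; clear.
  by rewrite -!mulrA; congr (_ * _); rewrite mulrC -mulrA; congr (_ * _); rewrite mulrC.
rewrite e ler_pdivrMr; last by lra.
have hS : 0 <= L * (8 * al) by nra.
rewrite -(ger0_norm hS) -sqrtr_sqr ler_sqrt; last exact: sqr_ge0.
have h1 : G2 * N <= al ^+ 2 * K2 * N by apply: ler_wpM2r.
have h2 : al ^+ 2 * (K2 * N) <= al ^+ 2 * (16 * L ^+ 2) by apply: ler_wpM2l => //; exact: sqr_ge0.
nra.
Qed.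
End S4.

Lemma cos_le_scale (R : realType) (al t : R) : 1 <= al -> 0 <= t -> t <= pi / (2 * al) ->
  cos (al * t) <= cos t.
Proof.
move=> ha ht htp.
have hal : 0 < al by lra.
have h1 : al * t <= pi / 2.
  have e : al * (pi / (2 * al)) = pi / 2.
    by field; rewrite gt_eqF.
  by rewrite -e ler_pM2l.
have hpi := pi_ge0 R.
have h2 : t <= al * t by rewrite -{1}(mul1r t) ler_wpM2r.
have hp2 : (pi : R) / 2 <= pi by lra.
have [e|lt] := eqVneq t (al * t); first by rewrite -e.
have lt' : t < al * t by rewrite lt_def eq_sym lt h2.
apply: ltW.
rewrite ltr_cos // in_itv /=; apply/andP; split; lra.
Qed.


Theorem lemma4p9 (R : realType) (alpha beta : nat) (h : 'M[R[i]]_2 -> R)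
  (M : 'M[R]_3) (C : R) (l1 l2 l3 : R) (w u v : 'cV[R]_3)
  (theta_s phi_s : R) :
  (0 < alpha)%N -> (0 < beta)%N ->
  (* h is differentiable on an open neighbourhood of U_2 (as a function of
     the 8 real coordinates of C^{2x2}) *)
  (exists O : set ('M[R]_2 * 'M[R]_2),
      open O /\ (forall U, unitary U -> O (reim U)) /\
      (forall p, O p -> differentiable (realify h) p)) ->
  (* invariance under right multiplication by diagonal unitaries *)
  (forall P D : 'M[R[i]]_2, unitary P -> unitary D -> is_diag_mx D ->
      h (P *m D) = h P) ->
  (* quadratic representation *)
  M^T = M ->
  (forall theta phi : R,
      h (Psi theta phi) = qform M (zab alpha beta theta phi) + C) ->
  (* spectral data *)
  l1 >= l2 -> l2 >= l3 ->
  M *m w = l1 *: w -> M *m u = l2 *: u -> M *m v = l3 *: v ->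
  w^T *m w = 1%:M -> u^T *m u = 1%:M -> v^T *m v = 1%:M ->
  w^T *m u = 0 -> w^T *m v = 0 -> u^T *m v = 0 ->
  0 <= w 0 0 ->
  u 0 0 = 0 \/ v 0 0 = 0 ->
  (* the maximizer *)
  0 <= theta_s -> theta_s <= pi / (2 * alpha%:R) ->
  zab alpha beta theta_s phi_s = w ->
  h (Psi theta_s phi_s) - h 1%:M >=
    Num.sqrt 2 / (8 * alpha%:R) * fnorm (rgrad h 1%:M)
      * fnorm (Psi theta_s phi_s - 1%:M).

Proof.
move=> ha hb [Os [oO [hU hD]]] hinv hMT hq hl12 hl23 hMw hMu hMv hww huu hvv hwu hwv huv hw0 huv0 ht0 htpi hz.
set F := realify h.
set p0 := reim (1%:M : 'M[R[i]]_2).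
have dF : differentiable F p0 by apply: hD; apply: hU; exact: unitary1.
have p0E : p0 = (mx2 1 0 0 1, mx2 0 0 0 0) by rewrite /p0 reim1.
have Z0 : (mx2 0 0 0 0 : 'M[R]_2) = 0 by rewrite -mx2_0.
have dPsi : forall phi : R,
  'd F p0 (mx2 0 (- cos phi) (cos phi) 0, mx2 0 (- sin phi) (- sin phi) 0) =
   - (alpha%:R * cos (beta%:R * phi)) * (M 0 1 + M 1 0)
   - (alpha%:R * sin (beta%:R * phi)) * (M 0 2%:R + M 2%:R 0).
  move=> phi.
  have AK : ((mx2 1 0 0 1, mx2 0 0 0 0) + (mx2 0 0 0 0, mx2 0 0 0 0) : 'M[R]_2 * 'M[R]_2) = p0.
    by rewrite p0E pairD' !mx2_D; congr (pair (mx2 _ _ _ _) (mx2 _ _ _ _)); ring.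
  rewrite -AK.
  apply: (@chain_deriv R _ F (mx2 1 0 0 1, mx2 0 0 0 0)
     (mx2 0 (- cos phi) (cos phi) 0, mx2 0 (- sin phi) (- sin phi) 0)
     (mx2 0 0 0 0, mx2 0 0 0 0) _ _ _ _ (@is_derive_q R M alpha%:R (cos (beta%:R * phi)) (sin (beta%:R * phi)) C)) => [|t].
    by rewrite AK.
  by rewrite -Psi_reim /F /realify of_reimK hq.
have dD0 : 'd F p0 (mx2 0 0 0 0, mx2 1 0 0 0) = 0.
  have AK : ((mx2 1 0 0 0, mx2 0 0 0 0) + (mx2 0 0 0 1, mx2 0 0 0 0) : 'M[R]_2 * 'M[R]_2) = p0.
    by rewrite p0E pairD' !mx2_D; congr (pair (mx2 _ _ _ _) (mx2 _ _ _ _)); ring.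
  rewrite -AK.
  apply: (@chain_deriv R _ F (mx2 1 0 0 0, mx2 0 0 0 0) (mx2 0 0 0 0, mx2 1 0 0 0)
     (mx2 0 0 0 1, mx2 0 0 0 0) (fun _ => h 1%:M) _ _ _ (@idC R (h 1%:M))) => [|t].
    by rewrite AK.
  rewrite -D0_reim /F /realify of_reimK -[D0 R t]mul1mx hinv //.
  - exact: unitary1.
  - exact: unitaryD0.
  - exact: diag_mx2.
have dD1 : 'd F p0 (mx2 0 0 0 0, mx2 0 0 0 1) = 0.
  have AK : ((mx2 0 0 0 1, mx2 0 0 0 0) + (mx2 1 0 0 0, mx2 0 0 0 0) : 'M[R]_2 * 'M[R]_2) = p0.
    by rewrite p0E pairD' !mx2_D; congr (pair (mx2 _ _ _ _) (mx2 _ _ _ _)); ring.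
  rewrite -AK.
  apply: (@chain_deriv R _ F (mx2 0 0 0 1, mx2 0 0 0 0) (mx2 0 0 0 0, mx2 0 0 0 1)
     (mx2 1 0 0 0, mx2 0 0 0 0) (fun _ => h 1%:M) _ _ _ (@idC R (h 1%:M))) => [|t].
    by rewrite AK.
  rewrite -D1_reim /F /realify of_reimK -[D1 R t]mul1mx hinv //.
  - exact: unitary1.
  - exact: unitaryD1.
  - exact: diag_mx2.
pose Z := (mx2 0 0 0 0 : 'M[R]_2).
have egE : egrad h 1%:M = mx2
   (mkC ('d F p0 (mx2 1 0 0 0, Z)) ('d F p0 (Z, mx2 1 0 0 0)))
   (mkC ('d F p0 (mx2 0 1 0 0, Z)) ('d F p0 (Z, mx2 0 1 0 0)))
   (mkC ('d F p0 (mx2 0 0 1 0, Z)) ('d F p0 (Z, mx2 0 0 1 0)))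
   (mkC ('d F p0 (mx2 0 0 0 1, Z)) ('d F p0 (Z, mx2 0 0 0 1))).
  rewrite [LHS]mx2_eta /egrad !mxE -/F -/p0 !deriveE //.
  by rewrite delta00 delta01 delta10 delta11 /Z mx2_0.
pose X := ('d F p0 (mx2 0 0 1 0, Z) - 'd F p0 (mx2 0 1 0 0, Z)) / 2.
pose Y := ('d F p0 (Z, mx2 0 0 1 0) + 'd F p0 (Z, mx2 0 1 0 0)) / 2.
have hG : fnorm (rgrad h 1%:M) = Num.sqrt (2 * (X ^+ 2 + Y ^+ 2)).
  rewrite /rgrad egE fnorm_rgrad ?ImmkC // !RemkC !ImmkC.
have hsym : forall i j, M i j = M j i.
  by move=> i j; rewrite -{1}hMT mxE.
have hXY : forall phi : R, X * cos phi - Y * sin phi =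
    - (alpha%:R * (M 1 0 * cos (beta%:R * phi) + M 2%:R 0 * sin (beta%:R * phi))).
  move=> phi; have := dPsi phi.
  have dZ : forall (c : R) vv, 'd F p0 (c *: vv) = c * 'd F p0 vv by move=> c vv; rewrite linearZ.
  rewrite dir_decomp linearD !dZ !linearB linearN.
  rewrite (hsym 0 1) (hsym 0 2%:R) /X /Y -/Z => H.
  lra.
have hgb := @grad_bound R X Y alpha%:R (M 1 0) (M 2%:R 0) beta%:R hXY.
have hc := @complete3 R w u v hww huu hvv hwu hwv huv.
have hM := @Mcol0 R M l1 l2 l3 w u v hMw hMu hMv hc.
have c0 := hc 0; have c1 := hc 1; have c2 := hc 2%:R.
rewrite /= in c0 c1 c2.
have m0 := hM 0; have m1 := hM 1; have m2 := hM 2%:R.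
have hwn := @dot3 R w w; rewrite hww mxE eqxx mulr1n in hwn.
have hza : cos (alpha%:R * theta_s) = w 0 0.
  by have := congr1 (fun z : 'cV[R]_3 => z 0 0) hz; rewrite /zab /col3 mxE.
have hal1 : (1 : R) <= alpha%:R by rewrite ler1n.
have hcos := @cos_le_scale R alpha%:R theta_s hal1 ht0 htpi.
have hN0 : 0 <= 4 - 4 * cos theta_s by have := cos_le1 theta_s; lra.
have hN1 : 4 - 4 * cos theta_s <= 4 * (1 - w 0 0) by lra.
have key : 0 <= l1 - M 0 0 /\ (M 1 0 ^+ 2 + M 2%:R 0 ^+ 2) * (4 - 4 * cos theta_s) <= 16 * (l1 - M 0 0) ^+ 2.
  clear -c0 c1 c2 m0 m1 m2 hwn hN0 hN1 hw0 hl12 hl23 huv0.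
  case: huv0 => h0; rewrite h0 in c0 c1 c2 m0 m1 m2.
  - by apply: (@scal_key R (w 0 0) (v 0 0) (w 1 0) (w 2%:R 0) (v 1 0) (v 2%:R 0) l1 l3); lra.
  - by apply: (@scal_key R (w 0 0) (u 0 0) (w 1 0) (w 2%:R 0) (u 1 0) (u 2%:R 0) l1 l2); lra.
have hPsi : h (Psi theta_s phi_s) = l1 + C.
  by rewrite hq hz /qform -mulmxA hMw -scalemxAr mxE hww mxE eqxx mulr1n mulr1.
have h1 : h 1%:M = M 0 0 + C.
  rewrite -(Psi00 R) hq /zab !mulr0 cos0 sin0 qformE; ring.
rewrite hPsi h1 hG fnorm_PsiB.
have -> : l1 + C - (M 0 0 + C) = l1 - M 0 0 by ring.
case: key => kL kK.
apply: (@final_ineq R alpha%:R (l1 - M 0 0) (X ^+ 2 + Y ^+ 2) (M 1 0 ^+ 2 + M 2%:R 0 ^+ 2) (4 - 4 * cos theta_s)) => //.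
- by rewrite ltr0n.
- by apply: addr_ge0; apply: sqr_ge0.
Qed.
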